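(* Fix an agent $k$ and coefficients $W_{i,j}\in[-1,1]$, $i,j\in[m_k]$, and suppose there are $\varepsilon'\ge\varepsilon''\ge0$ with $W_{i,i}\ge\max\{W_{i,j}-\varepsilon',-\varepsilon''\}$ for all $i,j$. Let $\hat q^*$ be any optimal solution of $(P^4)$. Then $\hat q^*$ is also an optimal solution of $(P^3)$. Moreover, if $(\hat\lambda^*,\hat\mu^*,\hat\pi^* )$ are Lagrange multipliers satisfying the KKT conditions of $(P^4)$ at $\hat q^*$, then there exists $\lambda^*=(\lambda^*_{i,j})_{i,j}$ such that $(\lambda^*,\mu^*=\hat\mu^*,\pi^*=\hat\pi^* )$ satisfies the KKT conditions of $(P^3)$ at $q^*=\hat q^*$.
   Context: Agent $k$ has finite type support $\{t_k^{(1)},\dots,t_k^{(m_k)}\}$ with probabilities $F_i>0$; $m=\max_{k'}m_{k'}$. With $\gamma>0$ and $\phi(\mathbf{q})=\frac12\gamma\|\mathbf{q}\|_2^2$: program $(P^3)$ maximizes $\sum_iF_i(\sum_jW_{i,j}q_{i,j}-\phi(\mathbf{q}_i))$ subject to $\sum_jq_{i,j}=1$ ($\forall i$), $\sum_iF_iq_{i,j}=F_j$ ($\forall j$), $q_{i,j}\ge0$. Program $(P^4)$ is the same with $W_{i,j}$ replaced by $\hat W_{i,j}=W_{i,j}$ if $W_{i,j}\ge-m(\varepsilon'+2\gamma)-\varepsilon''$ and $\hat W_{i,j}=-m(\varepsilon'+2\gamma)-\varepsilon''$ otherwise. KKT conditions of a program with coefficients $V_{i,j}$ (either $W$ or $\hat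 W$) at solution $q$ with multipliers $(\lambda,\mu,\pi)$: (1) $F_i(V_{i,j}-\partial\phi(\mathbf{q}_i)/\partial q_{i,j})=\lambda_{i,j}+\mu_i+F_i\pi_j$; (2) $\lambda_{i,j}\le0$; (3) $\lambda_{i,j}q_{i,j}=0$, for all $i,j$. *)

(* Defs.v *)
From HB Require Import structures.
From mathcomp Require Import all_boot all_order all_algebra.
Set Implicit Arguments. Unset Strict Implicit. Unset Printing Implicit Defensive.
Import Order.TTheory GRing.Theory Num.Theory.
Local Open Scope ring_scope.

Section Defs.
Variables (R : realFieldType) (n : nat).

Definition phi (gamma : R) (qi : 'I_n -> R) : R :=
  gamma / 2%:R * \sum_(j < n) qi j ^+ 2.

Definition dphi (gamma : R) (qi : 'I_n -> R) (j : 'I_n) : R := gamma * qi j.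

Definition feasible (F : 'I_n -> R) (q : 'I_n -> 'I_n -> R) : Prop :=
  [/\ forall i, \sum_(j < n) q i j = 1,
      forall j, \sum_(i < n) F i * q i j = F j
    & forall i j, 0 <= q i j].

Definition objective (gamma : R) (F : 'I_n -> R) (V : 'I_n -> 'I_n -> R)
  (q : 'I_n -> 'I_n -> R) : R :=
  \sum_(i < n) F i * (\sum_(j < n) V i j * q i j - phi gamma (q i)).

Definition optimal (gamma : R) (F : 'I_n -> R) (V : 'I_n -> 'I_n -> R)
  (q : 'I_n -> 'I_n -> R) : Prop :=
  feasible F q /\
  forall q', feasible F q' -> objective gamma F V q' <= objective gamma F V q.

Definition What (m : nat) (eps1 eps2 gamma : R) (W : 'I_n -> 'I_n -> R)
  (i j : 'I_n) : R :=
  let c := - (m%:R * (eps1 + 2%:R * gamma)) - eps2 in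
  if c <= W i j then W i j else c.

Definition KKT (gamma : R) (F : 'I_n -> R) (V : 'I_n -> 'I_n -> R)
  (q : 'I_n -> 'I_n -> R) (lam : 'I_n -> 'I_n -> R) (mu pi : 'I_n -> R) : Prop :=
  forall i j,
    [/\ F i * (V i j - dphi gamma (q i) j) = lam i j + mu i + F i * pi j,
        lam i j <= 0
      & lam i j * q i j = 0].

End Defs.

(* Main.v *)
Require Import Defs.
From HB Require Import structures.
From mathcomp Require Import all_boot all_order all_algebra.
From mathcomp Require Import ring lra.
Set Implicit Arguments. Unset Strict Implicit. Unset Printing Implicit Defensive.
Import Order.TTheory GRing.Theory Num.Theory.
Local Open Scope ring_scope.

Section Aux.
Variables (R : realFieldType) (n : nat).

Lemma sum_indl (r : 'I_n -> R) a : \sum_b r b * (a == b)%:R = r a.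
Proof.
rewrite (bigD1 a) //= eqxx mulr1 big1 ?addr0 // => b nb.
by rewrite eq_sym (negbTE nb) mulr0.
Qed.

Lemma sum_indr (r : 'I_n -> R) a : \sum_b r b * (b == a)%:R = r a.
Proof.
rewrite (bigD1 a) //= eqxx mulr1 big1 ?addr0 // => b nb.
by rewrite (negbTE nb) mulr0.
Qed.

Lemma sumd (r : 'I_n -> R) (u : R) a s :
  \sum_b r b * (u * ((a == b)%:R - (b == s)%:R)) = u * (r a - r s).
Proof.
rewrite -sum_indl -sum_indr -sumrB mulr_sumr; apply: eq_bigr => b _; ring.
Qed.

Lemma sq_ind (a s b : 'I_n) : a != s ->
  ((a == b)%:R - (b == s)%:R) ^+ 2 = (a == b)%:R + (b == s)%:R :> R.
Proof.
move=> nas; case: (eqVneq a b) => [<-|_]; first by rewrite (negbTE (nas)) /=; ring.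
by case: (b == s) => /=; ring.
Qed.

Lemma row_change (gamma t f : R) (Va qa qa' : 'I_n -> R) a s :
  f != 0 -> a != s ->
  (forall b, qa' b = qa b + t / f * ((a == b)%:R - (b == s)%:R)) ->
  f * (\sum_b Va b * qa' b - phi gamma qa') =
  f * (\sum_b Va b * qa b - phi gamma qa) +
  t * (Va a - Va s - gamma * (qa a - qa s)) - gamma * t ^+ 2 / f.
Proof.
move=> f0 nas H.
have e1 : \sum_b Va b * qa' b = \sum_b Va b * qa b + t / f * (Va a - Va s).
  rewrite -(sumd Va) -big_split; apply: eq_bigr => b _; by rewrite H mulrDr.
have e2 : \sum_b qa' b ^+ 2 = \sum_b qa b ^+ 2 + 2%:R * (t / f * (qa a - qa s))
     + (t / f) ^+ 2 * 2%:R.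
  have s2 : \sum_b (t / f) ^+ 2 * ((a == b)%:R - (b == s)%:R) ^+ 2
       = (t / f) ^+ 2 * 2%:R.
    rewrite -mulr_sumr; congr (_ * _).
    under eq_bigr => b _ do rewrite sq_ind //.
    rewrite big_split /=.
    have -> : \sum_b ((a == b)%:R : R) = \sum_b 1 * (a == b)%:R.
      by apply: eq_bigr => b _; rewrite mul1r.
    have -> : \sum_b ((b == s)%:R : R) = \sum_b 1 * (b == s)%:R.
      by apply: eq_bigr => b _; rewrite mul1r.
    by rewrite (sum_indl (fun=> 1)) (sum_indr (fun=> 1)).
  rewrite -s2 -(sumd qa) mulr_sumr -!big_split; apply: eq_bigr => b _.
  rewrite /= H; ring.
rewrite /phi e1 e2; field.
exact: f0.
Qed.

Lemma sum_next (c : seq 'I_n) b : uniq c ->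
  \sum_(a in c) (b == next c a)%:R = (b \in c)%:R :> R.
Proof.
move=> uc; case: (boolP (b \in c)) => bc.
  rewrite (bigD1 (prev c b)) /=; last by rewrite mem_prev.
  rewrite next_prev // eqxx big1 ?addr0 // => a /andP[ac ne].
  case: eqP => // E; exfalso; move/negP: ne; apply.
  by rewrite E prev_next.
rewrite big1 // => a ac; case: eqP => // E.
by move: bc; rewrite E mem_next ac.
Qed.

Lemma sum_self (c : seq 'I_n) b :
  \sum_(a in c) (a == b)%:R = (b \in c)%:R :> R.
Proof.
case: (boolP (b \in c)) => bc.
  rewrite (bigD1 b) //= eqxx big1 ?addr0 // => a /andP[_ ne].
  by rewrite (negbTE ne).
rewrite big1 // => a ac; case: eqP => // E.
by move: bc; rewrite -E ac.
Qed.

Lemma exists_min (s : seq 'I_n) (g : 'I_n -> R) :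
  (forall a, a \in s -> 0 < g a) ->
  exists2 t, 0 < t & forall a, a \in s -> t <= g a.
Proof.
elim: s => [|x s IH] H; first by exists 1.
have [t t0 tle] : exists2 t, 0 < t & forall a, a \in s -> t <= g a.
  by apply: IH => a as'; apply: H; rewrite inE as' orbT.
exists (Num.min (g x) t).
  by rewrite lt_min t0 H ?mem_head.
move=> a; rewrite inE => /orP[/eqP ->|as']; rewrite ge_min.
  by rewrite lexx.
by rewrite tle ?orbT.
Qed.



Definition erel (q : 'I_n -> 'I_n -> R) : rel 'I_n :=
  fun a b => (a != b) && (0 < q a b).

Lemma reach (F : 'I_n -> R) (q : 'I_n -> 'I_n -> R) i j :
  (forall a, 0 < F a) -> feasible F q -> 0 < q i j ->
  connect (erel q) j i.
Proof.
move=> Fpos [rows cols qge0] qij.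
set S := [set a | connect (erel q) j a].
apply/negPn/negP => niS.
have iS : i \notin S by rewrite inE.
have jS : j \in S by rewrite inE connect0.
have Hout : forall a b, a \in S -> b \notin S -> q a b = 0.
  move=> a b aS bS.
  have : ~~ erel q a b.
    apply: contra bS => eab; rewrite /S !inE in aS *.
    exact: connect_trans aS (connect1 eab).
  rewrite /erel negb_and negbK => /orP[/eqP ab|].
    by subst; rewrite aS in bS.
  by rewrite -leNgt => h; apply/le_anti; rewrite h qge0.
have E1 : \sum_(a in S) \sum_b F a * q a b = \sum_(a in S) F a.
  by apply: eq_bigr => a _; rewrite -mulr_sumr rows mulr1.
have E2 : \sum_(b in S) \sum_a F a * q a b = \sum_(b in S) F b.
  by apply: eq_bigr => b _; rewrite cols.
have E1' : \sum_(a in S) \sum_b F a * q a b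
         = \sum_(a in S) \sum_(b in S) F a * q a b.
  apply: eq_bigr => a aS; rewrite (bigID (mem S)) /=.
  by rewrite [X in _ + X]big1 ?addr0 // => b bS; rewrite Hout ?mulr0.
have E2' : \sum_(b in S) \sum_a F a * q a b
         = \sum_(b in S) \sum_(a in S) F a * q a b
           + \sum_(b in S) \sum_(a | a \notin S) F a * q a b.
  by rewrite -big_split; apply: eq_bigr => b _; rewrite (bigID (mem S)).
have Z : \sum_(b in S) \sum_(a | a \notin S) F a * q a b = 0.
  have := E2'; rewrite E2 -E1 E1' exchange_big /=.
  move=> h; lra.
have ge0 : forall a b, 0 <= F a * q a b.
  by move=> a b; rewrite mulr_ge0 // ltW.
have Z2 := psumr_eq0P (fun b _ => sumr_ge0 _ (fun a _ => ge0 a b)) Z jS.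
have := psumr_eq0P (fun a _ => ge0 a j) Z2 iS.
by move/eqP; rewrite mulf_eq0 !gt_eqF.
Qed.

Lemma sum0d (u : R) (a s : 'I_n) :
  \sum_b u * ((a == b)%:R - (b == s)%:R) = 0.
Proof.
transitivity (\sum_b (fun=> 1) b * (u * ((a == b)%:R - (b == s)%:R))).
  by apply: eq_bigr => b _; rewrite mul1r.
by rewrite sumd subrr mulr0.
Qed.

Lemma improve (gamma : R) (F : 'I_n -> R) (V q : 'I_n -> 'I_n -> R)
  (c : seq 'I_n) :
  0 <= gamma -> (forall a, 0 < F a) -> feasible F q -> uniq c ->
  cycle (erel q) c ->
  0 < \sum_(a in c) (V a a - V a (next c a) - gamma * (q a a - q a (next c a))) ->
  exists2 q', feasible F q' & objective gamma F V q < objective gamma F V q'.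
Proof.
move=> g0 Fpos [rows cols qge0] uc cyc Apos.
set A := \sum_(a in c) _ in Apos.
have hnx : forall a, a \in c -> a != next c a /\ 0 < q a (next c a).
  by move=> a ac; have /andP[] := next_cycle cyc ac.
have [t0 t0pos t0le] := exists_min (g := fun a => F a * q a (next c a)) (s := c)
   (fun a ac => mulr_gt0 (Fpos a) (hnx a ac).2).
set B := gamma * \sum_(a in c) (F a)^-1.
have B0 : 0 <= B by rewrite mulr_ge0 // sumr_ge0 // => a _; rewrite invr_ge0 ltW.
have B1 : 0 < B + 1 by lra.
set t := Num.min t0 (A / (B + 1)).
have tpos : 0 < t by rewrite lt_min t0pos divr_gt0.
have tt0 : t <= t0 by rewrite ge_min lexx.
have tA : t <= A / (B + 1) by rewrite ge_min lexx orbT.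
have tB : t * B < A.
  have h1 : t * B <= A / (B + 1) * B := ler_wpM2r B0 tA.
  have h2 : A / (B + 1) * (B + 1) = A by rewrite divfK // gt_eqF.
  have h3 : 0 < A / (B + 1) by rewrite divr_gt0.
  nra.
set d := fun a b => if a \in c then
   t / F a * ((a == b)%:R - (b == next c a)%:R) else 0.
exists (fun a b => q a b + d a b).
  split.
  - move=> a; rewrite big_split /= (rows a) /d /=; case ac: (a \in c).
      by rewrite sum0d addr0.
    by rewrite big1 ?addr0.
  - move=> b; under eq_bigr do rewrite mulrDr.
    rewrite big_split /= cols.
    rewrite (_ : \sum_a F a * d a b
              = \sum_(a in c) t * ((a == b)%:R - (b == next c a)%:R)).
      by rewrite -mulr_sumr sumrB sum_self sum_next // subrr mulr0 addr0.
    rewrite [RHS]big_mkcond /=; apply: eq_bigr => a _; rewrite /d.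
    case: ifP => _; last by rewrite mulr0.
    by field; rewrite gt_eqF.
  - move=> a b; rewrite /d /=; case: ifP => ac; last by rewrite addr0.
    have [ne qp] := hnx a ac.
    case: (eqVneq a b) => [<-|nab].
      rewrite (negbTE ne) subr0 mulr1.
      by rewrite addr_ge0 // divr_ge0 // ltW.
    case: (eqVneq b (next c a)) => [->|nbs].
      rewrite sub0r mulrN1 subr_ge0.
      rewrite ler_pdivrMr //; apply: le_trans tt0 _.
      by rewrite mulrC t0le.
    by rewrite subrr mulr0 addr0.
have Hrow : forall a,
  F a * (\sum_b V a b * (q a b + d a b) - phi gamma (fun b => q a b + d a b))
  = F a * (\sum_b V a b * q a b - phi gamma (q a)) +
    (if a \in c then t * (V a a - V a (next c a) - gamma * (q a a - q a (next c a)))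
        - gamma * t ^+ 2 / F a else 0).
  move=> a; rewrite /d /=; case ac: (a \in c).
    rewrite addrA; apply: row_change => //.
      by rewrite gt_eqF.
    exact: (hnx a ac).1.
  rewrite addr0 /phi; congr (_ * (_ - _ * _)); apply: eq_bigr => b _;
    by rewrite addr0.
have -> : objective gamma F V (fun a b => q a b + d a b) = \sum_a
  (F a * (\sum_b V a b * q a b - phi gamma (q a)) +
    (if a \in c then t * (V a a - V a (next c a) - gamma * (q a a - q a (next c a)))
        - gamma * t ^+ 2 / F a else 0)).
  by apply: eq_bigr => a _; exact: Hrow.
rewrite /objective big_split /= -big_mkcond /= sumrB -mulr_sumr.
have -> : \sum_(a in c) gamma * t ^+ 2 / F a = t ^+ 2 * B.
  rewrite /B mulr_sumr mulr_sumr; apply: eq_bigr => a _; ring.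
have h : 0 < t * (A - t * B) by rewrite mulr_gt0 // subr_gt0.
have h' : t * (A - t * B) = t * A - t ^+ 2 * B by ring.
rewrite -/A ltrDl; lra.
Qed.
End Aux.

Lemma key (R : realFieldType) (n m : nat) (F : 'I_n -> R) (W : 'I_n -> 'I_n -> R)
  (gamma eps1 eps2 : R) (qh : 'I_n -> 'I_n -> R) :
  0 < gamma -> (forall i, 0 < F i) -> (n <= m)%N -> 0 <= eps2 -> eps2 <= eps1 ->
  (forall i j, W i j - eps1 <= W i i /\ - eps2 <= W i i) ->
  optimal gamma F (What m eps1 eps2 gamma W) qh ->
  forall i j, W i j < - (m%:R * (eps1 + 2%:R * gamma)) - eps2 -> qh i j = 0.
Proof.
move=> gpos Fpos nm e2 e21 Wd [feas opt] i j Wij.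
have X0 : 0 <= m%:R * (eps1 + 2%:R * gamma) by rewrite mulr_ge0 //; lra.
have c0le : - (m%:R * (eps1 + 2%:R * gamma)) - eps2 <= - eps2 by lra.
have Waa : forall a, What m eps1 eps2 gamma W a a = W a a.
  move=> a; rewrite /What /= ifT //; have := (Wd a a).2; lra.
have Wab : forall a b, What m eps1 eps2 gamma W a b <= W a a + eps1.
  move=> a b; rewrite /What /=; case: ifP => _; have := Wd a b; have := (Wd a a).2; lra.
have Wij' : What m eps1 eps2 gamma W i j = - (m%:R * (eps1 + 2%:R * gamma)) - eps2.
  by rewrite /What /= ifF //; apply/negbTE; rewrite -ltNge.
have [rows cols qge0] := feas.
have qle1 : forall a b, qh a b <= 1.
  move=> a b; rewrite -(rows a) (bigD1 b) //= lerDl sumr_ge0 //.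
apply/eqP; apply/negPn/negP => qne.
have qpos : 0 < qh i j by rewrite lt_def qne qge0.
have nij : i != j.
  by apply/eqP => E; subst; have := (Wd j j).2; lra.
have := reach Fpos feas qpos; case/connectP => p pth.
case: (shortenP pth) => p' pth' up _ ilast.
set cyc := j :: p'.
have nxi : next cyc i = j.
  by rewrite ilast /cyc next_nth mem_last (index_last up) /= nth_default.
have ic : i \in cyc by rewrite ilast mem_last.
have cy : cycle (erel qh) cyc.
  by rewrite /cyc /= rcons_path pth' -ilast /erel nij qpos.
have gle : forall a b, gamma * (qh a a - qh a b) <= gamma.
  move=> a b; rewrite -[X in _ <= X]mulr1; apply: ler_wpM2l; first exact: ltW.
  have := qle1 a a; have := qge0 a b; lra.
have Apos : 0 < \sum_(a in cyc) (What m eps1 eps2 gamma W a a - What m eps1 eps2 gamma W a (next cyc a) - gamma * (qh a a - qh a (next cyc a))).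
set T := fun a => What m eps1 eps2 gamma W a a
   - What m eps1 eps2 gamma W a (next cyc a)
   - gamma * (qh a a - qh a (next cyc a)).
rewrite (eq_bigr T) //.
have Tge : forall a, - (eps1 + gamma) <= T a.
  move=> a; rewrite /T Waa; have := Wab a (next cyc a); have := gle a (next cyc a).
  lra.
have Ti : m%:R * (eps1 + 2%:R * gamma) - gamma <= T i.
  rewrite /T nxi Waa Wij'; have := gle i j; have := (Wd i i).2; lra.
have sumge : T i + (eps1 + gamma) <= \sum_(a in cyc) (T a + (eps1 + gamma)).
  rewrite (bigD1 i) //= lerDl sumr_ge0 // => a _; have := Tge a; lra.
rewrite big_split /= sumr_const -mulr_natr in sumge.
have cardle : (#|[in cyc]| <= m)%N.
  by apply: leq_trans (max_card _) _; rewrite card_ord.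
have cardR : (#|[in cyc]|%:R <= m%:R :> R) by rewrite ler_nat.
have e1g : 0 <= eps1 + gamma by lra.
have hb : (eps1 + gamma) * #|[in cyc]|%:R <= (eps1 + gamma) * m%:R.
  by rewrite ler_wpM2l.
have m1 : (1 <= m)%N by apply: leq_trans nm; apply: leq_ltn_trans (leq0n i) (ltn_ord i).
have m1R : (1 <= m%:R :> R) by rewrite ler1n.
have mg : gamma <= m%:R * gamma by rewrite ler_peMl // ltW.
nra.
have [q' fq' lt] := improve (ltW gpos) Fpos feas up cy Apos.
by have := opt q' fq'; rewrite leNgt lt.
Qed.

Theorem mainTheorem12 (R : realFieldType) (n m : nat)
  (F : 'I_n -> R) (W : 'I_n -> 'I_n -> R) (gamma eps1 eps2 : R) :
  0 < gamma ->
  (forall i, 0 < F i) ->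
  \sum_(i < n) F i = 1 ->
  (n <= m)%N ->
  (forall i j, -1 <= W i j <= 1) ->
  0 <= eps2 -> eps2 <= eps1 ->
  (forall i j, W i j - eps1 <= W i i /\ - eps2 <= W i i) ->
  forall qh : 'I_n -> 'I_n -> R,
    optimal gamma F (What m eps1 eps2 gamma W) qh ->
    optimal gamma F W qh /\
    (forall (lamh : 'I_n -> 'I_n -> R) (muh pih : 'I_n -> R),
        KKT gamma F (What m eps1 eps2 gamma W) qh lamh muh pih ->
        exists lam : 'I_n -> 'I_n -> R, KKT gamma F W qh lam muh pih).
Proof.
move=> gpos Fpos _ nm _ e2 e21 Wd qh opt.
have K := key gpos Fpos nm e2 e21 Wd opt.
have Weq : forall i j, What m eps1 eps2 gamma W i j * qh i j = W i j * qh i j.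
  move=> i j; rewrite /What /=; case: ifP => // /negbT; rewrite -ltNge => /K ->.
  by rewrite !mulr0.
have Wle : forall i j, W i j <= What m eps1 eps2 gamma W i j.
  by move=> i j; rewrite /What /=; case: ifP => // /negbT; rewrite -ltNge => /ltW.
case: opt => feas opt; split.
  split => // q' fq'.
  have [_ _ q'ge0] := fq'.
  apply: le_trans (_ : objective gamma F (What m eps1 eps2 gamma W) q' <= _).
    apply: ler_sum => a _; apply: ler_wpM2l; first exact: ltW.
    rewrite lerD2r; apply: ler_sum => b _; apply: ler_wpM2r; [exact: q'ge0 | exact: Wle].
  apply: le_trans (opt q' fq') _; rewrite le_eqVlt; apply/orP; left; apply/eqP.
  apply: eq_bigr => a _; congr (_ * (_ - _)); apply: eq_bigr => b _; exact: Weq.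
move=> lamh muh pih KK.
exists (fun i j => lamh i j + F i * (W i j - What m eps1 eps2 gamma W i j)).
move=> i j; case: (KK i j) => k1 k2 k3; split.
- move: k1; rewrite /dphi => k1.
  have : F i * (W i j - gamma * qh i j) = F i * (What m eps1 eps2 gamma W i j - gamma * qh i j)
    + F i * (W i j - What m eps1 eps2 gamma W i j) by ring.
  rewrite k1 => ->; ring.
- have : F i * (W i j - What m eps1 eps2 gamma W i j) <= 0.
    by apply: mulr_ge0_le0; [exact: ltW | rewrite subr_le0].
  move: k2; lra.
- by rewrite mulrDl k3 add0r -mulrA mulrBl Weq subrr mulr0.
Qed.
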